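(* Let $\mathbb{K}$ be a positive commutative monoid and let $H$ be a hypergraph. If $H$ has the local-to-global consistency property for $\mathbb{K}$-relations, then for every subset $W$ of the set of vertices of $H$, the hypergraph $R(H[W])$ also has the local-to-global consistency property for $\mathbb{K}$-relations.
   Context: A commutative monoid $\mathbb{K}=(K,+,0)$ is positive if $p+q=0$ implies $p=q=0$. Attributes have domains; for a finite attribute set $X$, an $X$-tuple assigns each $A\in X$ a value in its domain; $t[Y]$ is restriction. A $\mathbb{K}$-relation over $X$ is a finitely supported function $R$ from $X$-tuples to $K$ (support $R'$); marginals are $R[Y](t)=\sum_{r\in R',r[Y]=t}R(r)$. For a hypergraph with hyperedges $X_1,\dots,X_m$ (vertices as attributes), a collection $R_1(X_1),\dots,R_m(X_m)$ is pairwise consistent if every two $R_i,R_j$ have a $\mathbb{K}$-relation $W$ over $X_i\cup X_j$ with $W[X_i]=R_i$, $W[X_j]=R_j$, and globally consistent if some $W$ over $X_1\cup\dots\cup X_m$ has $W[X_i]=R_i$ for all $i$. A hypergraph has the local-to-global consistency property for $\mathbb{K}$-relations if every pairwise consistent collection of $\mathbb{K}$-relations over its hyperedges is globally consistent. For $H=(V,E)$ and $W\subseteq V$, $H[W]$ is the hypergraph with vertex set $W$ and hyperedges the non-empty sets $X\cap W$, $X\in E$. The reduction $R(H)$ of a hypergraph $H$ has the same vertices and as hyperedges those hyperedges of $H$ not contained in any other hyperedge of $H$. *)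

(* Defs.v *)
From HB Require Import structures.
From mathcomp Require Import all_boot all_order all_algebra.
Set Implicit Arguments. Unset Strict Implicit. Unset Printing Implicit Defensive.
Import Order.TTheory GRing.Theory Num.Theory.
Local Open Scope ring_scope.

Definition positive_monoid (K : nmodType) : Prop :=
  forall p q : K, p + q = 0 -> p = 0 /\ q = 0.

Section Relations.
Variables (V : finType) (D : V -> eqType).

(* Partial tuples: an assignment to every attribute v of either a value in
   its domain D v or None (undefined).  An X-tuple is a partial tuple whose
   set of defined attributes is exactly X. *)
Definition ptuple := {dffun forall v : V, option (D v)}.

Definition pdom (t : ptuple) : {set V} := [set v | t v != None].

Definition restr (Y : {set V}) (t : ptuple) : ptuple :=
  [ffun v => if v \in Y then t v else None].

(* A K-relation over X: a function from X-tuples to K, represented as a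
   function on partial tuples that vanishes outside X-tuples, together with
   its (finite, duplicate-free) support R'. *)
Record krel (K : nmodType) (X : {set V}) := KRel {
  kval :> ptuple -> K;
  ksupp : seq ptuple;
  ksupp_uniq : uniq ksupp;
  ksupp_spec : forall r, (r \in ksupp) = (kval r != 0);
  ksupp_dom : forall r, r \in ksupp -> pdom r = X
}.

Definition marg (K : nmodType) (X : {set V}) (R : krel K X) (Y : {set V})
  (t : ptuple) : K :=
  \sum_(r <- ksupp R | restr Y r == t) R r.

End Relations.

Record hypergraph (V : finType) := Hypergraph {
  hverts : {set V};
  hedges : {set {set V}}
}.

Definition wf_hypergraph (V : finType) (H : hypergraph V) : Prop :=
  forall X, X \in hedges H -> X \subset hverts H.

Definition induced (V : finType) (H : hypergraph V) (W : {set V}) :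
  hypergraph V :=
  Hypergraph W [set X :&: W | X in [set X in hedges H | X :&: W != set0]].

Definition reduction (V : finType) (H : hypergraph V) : hypergraph V :=
  Hypergraph (hverts H)
    [set X in hedges H | ~~ [exists Y in hedges H, (X \subset Y) && (X != Y)]].

Definition pairwise_consistent (K : nmodType) (V : finType) (D : V -> eqType)
  (E : {set {set V}}) (R : forall X : {set V}, krel D K X) : Prop :=
  forall Xi Xj, Xi \in E -> Xj \in E ->
    exists W : krel D K (Xi :|: Xj),
      (forall t, marg W Xi t = R Xi t) /\ (forall t, marg W Xj t = R Xj t).

Definition globally_consistent (K : nmodType) (V : finType) (D : V -> eqType)
  (E : {set {set V}}) (R : forall X : {set V}, krel D K X) : Prop :=
  exists W : krel D K (\bigcup_(X in E) X),
    forall X, X \in E -> forall t, marg W X t = R X t.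

Definition local_to_global (K : nmodType) (V : finType) (H : hypergraph V)
  : Prop :=
  forall (D : V -> eqType) (R : forall X : {set V}, krel D K X),
    pairwise_consistent (hedges H) R -> globally_consistent (hedges H) R.

(* Main.v *)
Require Import Defs.
From mathcomp Require Import all_boot all_order all_algebra.
Set Implicit Arguments. Unset Strict Implicit. Unset Printing Implicit Defensive.
Import GRing.Theory.
Local Open Scope ring_scope.

Section Gen.
Variables (V : finType) (K : nmodType).

Definition mass (D : V -> eqType) X (R : krel D K X) (P : pred (ptuple D)) : K :=
  \sum_(r <- ksupp R | P r) R r.

Lemma mass_congr D X (R : krel D K X) (P Q : pred (ptuple D)) :
  (forall r, r \in ksupp R -> P r = Q r) -> mass R P = mass R Q.
Proof.
move=> h; rewrite /mass big_seq_cond [RHS]big_seq_cond.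
apply: eq_bigl => r; case: (boolP (r \in ksupp R)) => hr /=; last by []. 
by rewrite h.
Qed.

Lemma mass_eqfun D X1 X2 (R1 : krel D K X1) (R2 : krel D K X2) P :
  (forall s, R1 s = R2 s) -> mass R1 P = mass R2 P.
Proof.
move=> h.
have pe : perm_eq (ksupp R1) (ksupp R2).
  by apply: uniq_perm; rewrite ?ksupp_uniq // => s; rewrite !ksupp_spec h.
by rewrite /mass (perm_big _ pe); apply: eq_bigr => s _; rewrite h.
Qed.

Lemma mass_pred1 D X (R : krel D K X) t : mass R (fun r => r == t) = R t.
Proof.
rewrite /mass; case: (boolP (t \in ksupp R)) => ht.
  rewrite (big_rem t) //= eqxx big1_seq ?addr0 // => r /andP[/eqP -> ].
  by rewrite mem_rem_uniqF ?ksupp_uniq.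
rewrite big1_seq; last by move=> r /andP[/eqP -> ]; rewrite (negbTE ht).
by move: ht; rewrite ksupp_spec negbK => /eqP.
Qed.

Lemma mass_neq0 D X (R : krel D K X) (P : pred (ptuple D)) :
  mass R P != 0 -> exists2 r, r \in ksupp R & P r.
Proof.
case: (boolP (has P (ksupp R))) => [/hasP[r h1 h2] _ | /hasPn hn]; first by exists r.
by rewrite /mass big1_seq ?eqxx // => r /andP[pr rin]; move: (hn r rin); rewrite pr.
Qed.

Lemma pos_sum (A : eqType) (l : seq A) (P : pred A) (F : A -> K) :
  positive_monoid K -> \sum_(r <- l | P r) F r = 0 ->
  forall r, r \in l -> P r -> F r = 0.
Proof.
move=> pos; elim: l => [|x l IH] //= h r.
rewrite big_cons in h.
case: (boolP (P x)) h => Px h.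
  have [h1 h2] := pos _ _ h.
  by rewrite inE => /orP[/eqP -> //| rin Pr]; apply: IH.
rewrite inE => /orP[/eqP -> | rin Pr]; [by rewrite (negbTE Px) | exact: IH].
Qed.

Lemma partition_seq (A B : eqType) (l : seq A) (phi : A -> B) (F : A -> K) (P : pred B) :
  \sum_(y <- undup (map phi l) | P y) \sum_(x <- l | phi x == y) F x =
  \sum_(x <- l | P (phi x)) F x.
Proof.
under eq_bigr => y _ do rewrite big_mkcond /=.
rewrite exchange_big /= [RHS]big_mkcond /= big_seq [RHS]big_seq.
apply: eq_bigr => x xl.
have hx : phi x \in undup (map phi l) by rewrite mem_undup map_f.
rewrite (big_rem (phi x)) //= eqxx big1_seq ?addr0 //.
move=> y /andP[Py yin]; case: eqP => // e.
by move: yin; rewrite -e mem_rem_uniqF ?undup_uniq.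
Qed.

Section Push.
Variables (D1 D2 : V -> eqType) (X : {set V}) (R : krel D1 K X)
  (phi : ptuple D1 -> ptuple D2) (Y : {set V}).

Definition pushf (s : ptuple D2) : K :=
  if pdom s == Y then \sum_(r <- ksupp R | phi r == s) R r else 0.

Definition pushs : seq (ptuple D2) :=
  [seq s <- undup (map phi (ksupp R)) | pushf s != 0].

Lemma pushs_uniq : uniq pushs.
Proof. by rewrite filter_uniq ?undup_uniq. Qed.

Lemma pushs_spec s : (s \in pushs) = (pushf s != 0).
Proof.
rewrite mem_filter; case: (boolP (pushf s != 0)) => //= h.
rewrite mem_undup; apply/mapP.
move: h; rewrite /pushf; case: (pdom s == Y); last by rewrite eqxx.
case: (boolP (has (fun r => phi r == s) (ksupp R))) => [/hasP[r h1 /eqP h2] _| /hasPn hn].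
  by exists r.
by rewrite big1_seq ?eqxx // => r /andP[pr rin]; move: (hn r rin); rewrite pr.
Qed.

Lemma pushs_dom s : s \in pushs -> pdom s = Y.
Proof. rewrite pushs_spec /pushf => h; apply/eqP; move: h; by case: (pdom s == Y); rewrite ?eqxx. Qed.

Definition push : krel D2 K Y := KRel pushs_uniq pushs_spec pushs_dom.

Lemma push_val t : push t = mass R (fun r => (phi r == t) && (pdom (phi r) == Y)).
Proof.
rewrite /= /pushf /mass; case: eqP => [<-|ne].
  by apply: eq_bigl => r; case: eqP => // ->; rewrite eqxx.
rewrite big_pred0 // => r; case: eqP => // -> /=; case: eqP => // /esym.
Qed.

Lemma mass_push P : mass push P = mass R (fun r => P (phi r) && (pdom (phi r) == Y)).
Proof.
rewrite /mass /= /pushs big_filter_cond.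
transitivity (\sum_(s <- undup (map phi (ksupp R)) | P s && (pdom s == Y))
                 \sum_(r <- ksupp R | phi r == s) R r).
  rewrite big_mkcond [RHS]big_mkcond /=; apply: eq_bigr => s _.
  rewrite /pushf; case: (P s); case: (pdom s == Y) => /=; rewrite ?andbT ?andbF ?eqxx //.
  by case: eqP => [->|].
exact: (partition_seq (ksupp R) phi R (fun s => P s && (pdom s == Y))).
Qed.
End Push.

Lemma pdom_restr D (B : {set V}) (r : ptuple D) : pdom (restr B r) = B :&: pdom r.
Proof. by apply/setP => v; rewrite !inE ffunE; case: (v \in B). Qed.

Lemma mass_marg (D : V -> eqType) (C B X : {set V}) (T : krel D K C) (R : krel D K X) (Q : pred (ptuple D)) :
  (forall s, R s = marg T B s) -> (forall r, r \in ksupp T -> B \subset pdom r) ->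
  mass R Q = mass T (fun r => Q (restr B r)).
Proof.
move=> h hB.
have e : forall s, R s = push T (restr B) B s.
  move=> s; rewrite h push_val.
  change (mass T (fun r => restr B r == s) = mass T (fun r => (restr B r == s) && (pdom (restr B r) == B))).
  by apply: mass_congr => r rin; rewrite pdom_restr (setIidPl (hB r rin)) eqxx andbT.
rewrite (mass_eqfun _ e) mass_push; apply: mass_congr => r rin.
by rewrite pdom_restr (setIidPl (hB r rin)) eqxx andbT.
Qed.

Lemma kzero_spec (D : V -> eqType) (r : ptuple D) : (r \in [::]) = ((fun _ => 0 : K) r != 0).
Proof. by rewrite eqxx. Qed.

Definition kzero (D : V -> eqType) (X : {set V}) : krel D K X :=
  @KRel V D K X (fun _ => 0) [::] erefl (@kzero_spec D) (fun r (h : r \in [::]) => False_ind _ (notF h)).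

End Gen.


Section Spec.
Variables (V : finType) (D : V -> eqType) (W : {set V}).

Definition Do : V -> eqType := fun v => (option (D v) : eqType).
Definition ext (A : {set V}) (r : ptuple D) : ptuple Do :=
  [ffun v => if v \in A then (if v \in W then omap Some (r v) else Some None) else None].
Definition back (A : {set V}) (g : ptuple Do) : ptuple D :=
  [ffun v => if v \in A then obind id (g v) else None].

Lemma pdomP (r : ptuple D) v : (v \in pdom r) = (r v != None).
Proof. by rewrite inE. Qed.

Lemma pdom_ext (A : {set V}) (r : ptuple D) : A :&: W \subset pdom r -> pdom (ext A r) = A.
Proof.
move=> h; apply/setP => v; rewrite inE ffunE.
case vA: (v \in A) => //=; case vW: (v \in W) => //=.
have : v \in pdom r by apply: (subsetP h); rewrite inE vA vW.
by rewrite pdomP; case: (r v).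
Qed.

Lemma restr_ext (A B : {set V}) (r : ptuple D) : B \subset A -> restr B (ext A r) = ext B r.
Proof.
move=> h; apply/ffunP => v; rewrite !ffunE.
by case vB: (v \in B); rewrite ?(subsetP h v vB).
Qed.

Lemma ext_restr (A C : {set V}) (r : ptuple D) : A :&: W \subset C -> ext A (restr C r) = ext A r.
Proof.
move=> h; apply/ffunP => v; rewrite !ffunE.
case vA: (v \in A) => //; case vW: (v \in W) => //.
by rewrite (subsetP h) // inE vA vW.
Qed.

Lemma back_ext (Z X : {set V}) (r : ptuple D) : Z \subset W -> Z \subset X -> pdom r = Z -> back Z (ext X r) = r.
Proof.
move=> hW hX hd; apply/ffunP => v; rewrite !ffunE.
case vZ: (v \in Z).
  by rewrite (subsetP hX v vZ) (subsetP hW v vZ); case: (r v).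
by move: vZ; rewrite -hd pdomP; case: (r v).
Qed.

Lemma restr_back (Z U : {set V}) (g : ptuple Do) : Z \subset U -> restr Z (back U g) = back Z g.
Proof.
move=> h; apply/ffunP => v; rewrite !ffunE.
by case vZ: (v \in Z); rewrite ?(subsetP h v vZ).
Qed.

Lemma back_restr (Z X : {set V}) (g : ptuple Do) : Z \subset X -> back Z (restr X g) = back Z g.
Proof.
move=> h; apply/ffunP => v; rewrite !ffunE.
by case vZ: (v \in Z); rewrite ?(subsetP h v vZ).
Qed.

End Spec.


Section Hyp.
Variable (V : finType).

Lemma in_induced (H : hypergraph V) W Y :
  Y \in hedges (induced H W) -> exists2 X, X \in hedges H & Y = X :&: W.
Proof. by move=> /imsetP[X]; rewrite inE => /andP[XE _] ->; exists X. Qed.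

Lemma to_induced (H : hypergraph V) W X :
  X \in hedges H -> X :&: W != set0 -> X :&: W \in hedges (induced H W).
Proof. by move=> XE ne; apply/imsetP; exists X; rewrite ?inE ?XE. Qed.

Lemma red_sub (G : hypergraph V) Z : Z \in hedges (reduction G) -> Z \in hedges G.
Proof. by rewrite inE => /andP[]. Qed.

Lemma red_max (G : hypergraph V) Z Y :
  Z \in hedges (reduction G) -> Y \in hedges G -> Z \subset Y -> Y = Z.
Proof.
rewrite inE => /andP[_ /existsPn h] YG ZY.
by have := h Y; rewrite YG ZY /= negbK => /eqP.
Qed.

Lemma red_ex (G : hypergraph V) Y :
  Y \in hedges G -> exists2 Z, Z \in hedges (reduction G) & Y \subset Z.
Proof.
move=> YG.
pose P := [pred Z | (Z \in hedges G) && (Y \subset Z)].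
have PY : P Y by rewrite /= YG subxx.
case: (arg_maxnP (fun Z : {set V} => #|Z|) PY) => Z /andP[ZG YZ] hmax.
exists Z => //; rewrite inE ZG /=; apply/existsPn => Y'.
apply/negP => /andP[Y'G /andP[ZY' neq]].
have := hmax Y'; rewrite /= Y'G (subset_trans YZ ZY') => /(_ isT) le.
have : Z \proper Y' by rewrite properEneq neq ZY'.
move/proper_card => lt; move: (leq_trans lt le); by rewrite ltnn.
Qed.
End Hyp.

Lemma stepA (K : nmodType) (V : finType) (D : V -> eqType) (W : {set V})
  (C Zx : {set V}) (T : krel D K C) (Rz : krel D K Zx) (A XY : {set V}) t :
  (forall s, marg T Zx s = Rz s) -> Zx \subset C -> A \subset XY ->
  A :&: W \subset Zx -> XY :&: W \subset C ->
  marg (push T (ext W XY) XY) A t = push Rz (ext W A) A t.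
Proof.
move=> hm ZC AXY AZ XYC.
change (mass (push T (ext W XY) XY) (fun s => restr A s == t) = push Rz (ext W A) A t).
rewrite mass_push push_val (mass_marg (R:=Rz) (T:=T) (B:=Zx)); first last.
- by move=> r rin; rewrite (ksupp_dom rin).
- by move=> s; rewrite hm.
apply: mass_congr => r rin; have dr := ksupp_dom rin.
rewrite restr_ext // ext_restr // (pdom_ext (A:=XY)) ?dr // eqxx andbT.
rewrite (pdom_ext (A:=A)) ?eqxx ?andbT //.
by rewrite dr (subset_trans AZ ZC).
Qed.

Unset Implicit Arguments. Set Strict Implicit.

Theorem corollary9 (K : nmodType) (V : finType) (H : hypergraph V) :
  positive_monoid K -> wf_hypergraph H -> local_to_global K H ->
  forall W : {set V}, W \subset hverts H ->
    local_to_global K (reduction (induced H W)).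
Proof.
move=> pos _ l2g W _ D R pc.
case: (set_0Vmem (hedges (reduction (induced H W)))) => [E0 | [Z0 Z0in]].
  by exists (@kzero V K D _) => X; rewrite E0 inE.
set E := hedges H in l2g *.
set E' := hedges (reduction (induced H W)) in pc Z0in *.
pose ZX X := odflt Z0 [pick Z in E' | X :&: W \subset Z].
have ZXin X : ZX X \in E' by rewrite /ZX; case: pickP => //= Z /andP[].
have ZXsub X : X \in E -> X :&: W \subset ZX X.
  move=> XE; rewrite /ZX; case: pickP => [Z /andP[_ //]|/= h].
  exfalso; case: (eqVneq (X :&: W) set0) => [e|ne].
    by move: (h Z0); rewrite Z0in e sub0set.
  have [Z ZE' sub] := red_ex (to_induced (W:=W) XE ne).
  by move: (h Z); rewrite ZE' sub.
pose R' := fun X => push (R (ZX X)) (ext W X) X.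
have pc' : pairwise_consistent E R'.
  move=> X Y XE YE.
  have [T [h1 h2]] := pc _ _ (ZXin X) (ZXin Y).
  have XYC : (X :|: Y) :&: W \subset ZX X :|: ZX Y.
    by rewrite setIUl; apply: setUSS; apply: ZXsub.
  exists (push T (ext W (X :|: Y)) (X :|: Y)); split => t.
    by apply: stepA => //; rewrite ?subsetUl ?ZXsub.
  by apply: stepA => //; rewrite ?subsetUr ?ZXsub.
have [G HG] := l2g (Do D) R' pc'.
pose U := \bigcup_(Z in E') Z.
have hU : forall g, g \in ksupp G -> pdom (back U g) = U.
  move=> g gin; apply/setP => v; rewrite inE ffunE.
  case vU: (v \in U); last by rewrite eqxx.
  have [Z1 Z1E vZ1] := bigcupP vU.
  have [X1 X1E eZ1] := in_induced (red_sub Z1E).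
  have : v \in X1 :&: W by rewrite -eZ1.
  rewrite inE => /andP[hv1 vW].
  have nz : marg G X1 (restr X1 g) != 0.
    apply/eqP => h0.
    have e := pos_sum (l:=ksupp G) (P:= fun r => restr X1 r == restr X1 g) (F := G) pos h0 gin (eqxx _).
    by move: gin; rewrite ksupp_spec e eqxx.
  rewrite HG // /R' push_val in nz.
  have [r rin /andP[/eqP e _]] := mass_neq0 nz.
  have := congr1 (fun f : ptuple (Do D) => f v) e; rewrite !ffunE hv1 vW => <-.
  have : v \in pdom r.
    by rewrite (ksupp_dom rin); apply: (subsetP (ZXsub X1 X1E)); rewrite inE hv1 vW.
  by rewrite pdomP; case: (r v).
exists (push G (back U) U) => Z ZE t.
have [X XE eZ] := in_induced (red_sub ZE).
have hZX : ZX X = Z.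
  apply: (red_max ZE); first exact: red_sub (ZXin X).
  by rewrite eZ; apply: ZXsub.
have ZW : Z \subset W by rewrite eZ subsetIr.
have ZXs : Z \subset X by rewrite eZ subsetIl.
have ZU : Z \subset U by apply: bigcup_sup.
change (mass (push G (back U) U) (fun s => restr Z s == t) = R Z t).
rewrite mass_push.
rewrite (mass_congr (Q := fun g => back Z (restr X g) == t)); last first.
  by move=> g gin; rewrite hU // eqxx andbT restr_back // back_restr.
rewrite -(@mass_marg _ _ _ _ X _ G (R' X) (fun s => back Z s == t)); first last.
- by move=> r rin; rewrite (ksupp_dom rin); apply: bigcup_sup.
- by move=> s; rewrite HG.
rewrite /R' mass_push.
move: (ZXsub X XE); rewrite hZX => sub.
rewrite -mass_pred1; apply: mass_congr => r rin; have dr := ksupp_dom rin.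
by rewrite back_ext // pdom_ext ?eqxx ?andbT // dr eZ.
Qed.
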